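(* Let $A=\{A_n\}_{n\ge0}$ be a finitely supported complex sequence with $A_0=0$, not identically zero, and put $a_n=(A_n-A_{n-1})/n$ for $n\ge1$ (so $A_n=\sum_{k=1}^n k a_k$). Then $$\sum_{n=1}^\infty\frac{|A_n|^2}{n(n+1)^2}<\sum_{n=1}^\infty\frac{|A_n|^2}{n^2(n+1)}\le\sum_{n=1}^\infty n|a_n|^2 .$$ *)

(* Defs.v *)
(* complex numbers are `R[i]` (mathcomp-real-closed `complex`)
   over an arbitrary `R : realType`; for R the real numbers this is C. *)
From mathcomp Require Import all_boot all_order all_algebra.
From mathcomp Require Import complex reals.
Set Implicit Arguments. Unset Strict Implicit. Unset Printing Implicit Defensive.
Import Order.TTheory GRing.Theory Num.Theory.
Local Open Scope ring_scope.

Definition adiff (R : realType) (A : nat -> R[i]) (n : nat) : R[i] :=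
  (A n - A n.-1) / n%:R.

(* Main.v *)
Require Import Defs.
From mathcomp Require Import all_boot all_order all_algebra.
From mathcomp Require Import complex reals.
From mathcomp Require Import ring lra.
Import Order.TTheory GRing.Theory Num.Theory.
Local Open Scope ring_scope.
Set Implicit Arguments. Unset Strict Implicit.

Section Aux.
Variable R : realType.
Local Open Scope complex_scope.

Definition nm (z : R[i]) : R := Num.sqrt ((complex.Re z)^+2 + (complex.Im z)^+2).

Lemma normE (z : R[i]) : `|z| = (nm z)%:C.
Proof. exact: normc_def. Qed.

Lemma nm_ge0 (z : R[i]) : 0 <= nm z.
Proof. exact: sqrtr_ge0. Qed.

Lemma nm_dist (x y : R[i]) : nm x - nm y <= nm (x - y).
Proof. by have := lerB_dist x y; rewrite !normE -rmorphB lecR. Qed.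

Lemma nm0 : nm (0 : R[i]) = 0.
Proof. by apply: complexI; rewrite -normE normr0. Qed.

Lemma nmC (x y : R[i]) : nm (x - y) = nm (y - x).
Proof. by apply: complexI; rewrite -!normE distrC. Qed.

Lemma nm_gt0 (x : R[i]) : x != 0 -> 0 < nm x.
Proof.
move=> hx; rewrite lt_def nm_ge0 andbT; apply/eqP => e.
by move: hx; rewrite -normr_eq0 normE e eqxx.
Qed.

Lemma ltF (n : nat) (x : R) : (0 < n)%N -> 0 < x ->
  x / (n%:R * n.+1%:R ^+ 2) < x / (n%:R ^+ 2 * n.+1%:R).
Proof.
move=> n0 x0.
have m1 : 1 <= n%:R :> R by rewrite ler1n.
have e : n.+1%:R = n%:R + 1 :> R by rewrite -natr1.
rewrite e -subr_gt0.
set m := n%:R : R in m1 *.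
have m0 : m != 0 by apply/eqP => h; rewrite h in m1; lra.
have m10 : m + 1 != 0 by apply/eqP => h; lra.
have -> : x / (m ^+ 2 * (m + 1)) - x / (m * (m + 1) ^+ 2) = x / (m^+2 * (m+1)^+2).
  by field; rewrite ?m0 ?m10.
apply: divr_gt0 => //; nra.
Qed.

Lemma rearr (x y z t : R) : x + z - t <= y -> x <= y - (z - t).
Proof. lra. Qed.

Lemma key (m u v w : R) : 1 <= m -> 0 <= w -> u - v <= w -> v - u <= w ->
  u^+2 / ((m+1)^+2 * (m+2)) + u^+2/((m+1)*(m+2)) - v^+2/(m*(m+1))
   <= (m+1) * (w/(m+1))^+2.
Proof.
move=> m1 w0 h1 h2.
rewrite -subr_ge0.
have m0 : m != 0 by apply/eqP => e; rewrite e in m1; lra.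
have m10 : m + 1 != 0 by apply/eqP => e; lra.
have m20 : m + 2 != 0 by apply/eqP => e; lra.
have -> : (m+1) * (w/(m+1))^+2 - (u^+2 / ((m+1)^+2 * (m+2)) + u^+2/((m+1)*(m+2))
   - v^+2/(m*(m+1))) = ((m*u - (m+1)*v)^+2 + m*(m+1)*(w^+2 - (u-v)^+2)) / (m * (m+1)^+2).
  by field; rewrite ?m0 ?m10 ?m20.
apply: divr_ge0; last by nra.
have h : (u - v)^+2 <= w^+2 by nra.
apply: addr_ge0; first exact: sqr_ge0.
apply: mulr_ge0; first nra.
by rewrite subr_ge0.
Qed.

Lemma keyn (n : nat) (u v w : R) : (0 < n)%N -> 0 <= w -> u - v <= w -> v - u <= w ->
  (n = 1%N -> u <= w /\ 0 <= u) ->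
  u^+2/(n%:R^+2 * n.+1%:R) + u^+2/(n%:R * n.+1%:R) - v^+2/(n.-1%:R * n%:R)
   <= n%:R * (w/n%:R)^+2.
Proof.
case: n => [//|[|k]] _ w0 h1 h2 h3.
  have [uw u0] := h3 erefl.
  rewrite /= mul0r invr0 mulr0 subr0 expr1n !mul1r divr1.
  have -> : u^+2/2%:R + u^+2/2%:R = u^+2 by field.
  nra.
have e1 : (k.+2)%:R = k.+1%:R + 1 :> R by rewrite -natr1.
have e2 : (k.+3)%:R = k.+1%:R + 2 :> R by rewrite -!natr1; ring.
rewrite e1 e2 /=.
apply: key => //.
by rewrite ler1n.
Qed.

End Aux.

Section Main.
Local Open Scope complex_scope.
Theorem corollary2p2 (R : realType) (A : nat -> R[i]) (N : nat) :
  (forall n : nat, (N < n)%N -> A n = 0) ->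
  A 0%N = 0 ->
  (exists n : nat, A n != 0) ->
  \sum_(1 <= n < N.+2) `|A n| ^+ 2 / (n%:R * (n.+1)%:R ^+ 2)
    < \sum_(1 <= n < N.+2) `|A n| ^+ 2 / (n%:R ^+ 2 * (n.+1)%:R)
  /\
  \sum_(1 <= n < N.+2) `|A n| ^+ 2 / (n%:R ^+ 2 * (n.+1)%:R)
    <= \sum_(1 <= n < N.+2) n%:R * `|adiff A n| ^+ 2.
Proof.
move=> hN hA0 [j hj].
set u := fun n => nm (A n).
set w := fun n => nm (A n - A n.-1).
have hF : \sum_(1 <= n < N.+2) `|A n| ^+ 2 / (n%:R * (n.+1)%:R ^+ 2) =
   (\sum_(1 <= n < N.+2) u n ^+ 2 / (n%:R * (n.+1)%:R ^+ 2))%:C.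
  rewrite rmorph_sum; apply: eq_bigr => n _.
  by rewrite normE rmorphM fmorphV rmorphXn rmorphM rmorphXn !rmorph_nat.
have hG : \sum_(1 <= n < N.+2) `|A n| ^+ 2 / (n%:R ^+ 2 * (n.+1)%:R) =
   (\sum_(1 <= n < N.+2) u n ^+ 2 / (n%:R ^+ 2 * (n.+1)%:R))%:C.
  rewrite rmorph_sum; apply: eq_bigr => n _.
  by rewrite normE rmorphM fmorphV rmorphXn rmorphM rmorphXn !rmorph_nat.
have hH : \sum_(1 <= n < N.+2) n%:R * `|adiff A n| ^+ 2 =
   (\sum_(1 <= n < N.+2) n%:R * (w n / n%:R) ^+ 2)%:C.
  rewrite rmorph_sum; apply: eq_bigr => n _.
  rewrite /adiff normrM normfV normr_nat normE.
  by rewrite rmorphM rmorphXn rmorphM fmorphV !rmorph_nat.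
rewrite hF hG hH ltcR lecR.
split.
  rewrite (bigID (fun n => A n != 0)) [X in _ < X](bigID (fun n => A n != 0)) /=.
  apply: ltr_leD.
    apply: ltr_sum.
      apply/hasP; exists j => //.
      rewrite mem_index_iota; apply/andP; split.
        by case: j hj => // ; rewrite hA0 eqxx.
      rewrite ltnS; apply: (leq_trans _ (leqnSn N)); rewrite leqNgt; apply/negP => h; move: hj; by rewrite hN // eqxx.
    move=> i hi; apply: ltF; first by case: i hi => //; rewrite hA0 eqxx.
    by rewrite exprn_gt0 // /u nm_gt0.
  apply: ler_sum => i; rewrite negbK => /eqP hi.
  by rewrite /u hi nm0 expr0n /= !mul0r.
set g := fun n : nat => u n ^+ 2 / (n%:R * n.+1%:R).
apply: (@le_trans _ _ (\sum_(1 <= n < N.+2) (n%:R * (w n / n%:R) ^+ 2 - (g n - g n.-1)))).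
  rewrite big_nat [X in _ <= X]big_nat; apply: ler_sum => n /andP [n1 _].
  have h4 : u n.-1 - u n <= w n by rewrite /w nmC; exact: nm_dist.
  have := @keyn R n (u n) (u n.-1) (w n) n1 (nm_ge0 _) (nm_dist _ _) h4.
  move=> h.
  have : n = 1%N -> u n <= w n /\ 0 <= u n.
    move=> ->; rewrite /w /= hA0 subr0; split => //; exact: nm_ge0.
  move=> /h {}h.
  rewrite /g /= (prednK n1).
  by move: h; apply: rearr.
rewrite sumrB lerBlDr lerDl.
rewrite big_add1 /= (telescope_sumr (fun n => g n)) //.
rewrite /g mul0r invr0 mulr0 subr0.
apply: divr_ge0; first exact: sqr_ge0.
by rewrite mulr_ge0 // ler0n.
Qed.
End Main.
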